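(* Let $X$ be a semi-permutation, let $T$ be any partitioning tree for $X$, let $U\subseteq V(T)$ be a set of vertices such that every root-to-leaf path of $T$ contains exactly one vertex of $U$, and let $(X^c,\{X^s_v\}_{v\in U})$ be the split of $(X,T)$ at $U$. Then $$\sum_{v\in U}\mathrm{opt}(X^s_v)+\mathrm{opt}(X^c)\le \mathrm{opt}(X).$$
   Context: Points have integer coordinates. Two points $p,q$ are collinear if $p.x=q.x$ or $p.y=q.y$; otherwise $\square_{p,q}$ is the smallest closed axis-parallel rectangle containing both. A non-collinear pair $(p,q)$ is satisfied in $S$ if some $r\in S\setminus\{p,q\}$ lies in $\square_{p,q}$; $S$ is satisfied if all its non-collinear pairs are. A row (column) is active for $X$ if it contains a point of $X$; $X$ is a semi-permutation if each active row contains exactly one point of $X$. $\mathrm{opt}(X)$ is the minimum $|Y|$ with $X\cup Y$ satisfied (and is $0$ if $X$ has one active column). Partitioning tree: let $B$ be the bounding box of $X$ and $\mathcal L$ the set of vertical lines with half-integral $x$-coordinate strictly between the minimum and maximum $x$-coordinates of $X$. A partitioning tree $T$ is a rooted binary tree whose vertices $v$ carry closed vertical strips $S(v)$: $S(\mathrm{root})=B$; an internal vertex $v$ owns a line $L(v)\in\mathcal L$ lying strictly inside $S(v)$ and its two children carry the two strips into which $L(v)$ splits $S(v)$; each leaf strip contains exactly one active column of $X$ (this is the tree produced by processing the lines of $\mathcal L$ in some order, each line splitting the current strip containing it). Split at $U$: for $v\in U$, the strip instance $X^s_v=X\cap S(v)$; the compressed instance $X^c$ is obtained by replacing, for every $v\in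 U$, each point $p\in X\cap S(v)$ by the point $(x_v,p.y)$, where $x_v$ is the $x$-coordinate of the leftmost active column of $X$ in $S(v)$ (i.e., collapsing all active columns of each strip $S(v)$ into one column). *)

(* Defs.v *)
From mathcomp Require Import all_boot all_order all_algebra.
From Stdlib Require Import ClassicalEpsilon.
Set Implicit Arguments. Unset Strict Implicit. Unset Printing Implicit Defensive.
Import Order.TTheory GRing.Theory Num.Theory.
Local Open Scope ring_scope.

(* A point (x, y) with integer coordinates: p.1 = x, p.2 = y. *)
Definition point := (int * int)%type.

Definition in_box (p q r : point) : bool :=
  (Num.min p.1 q.1 <= r.1 <= Num.max p.1 q.1) &&
  (Num.min p.2 q.2 <= r.2 <= Num.max p.2 q.2).

Definition satisfied (S : seq point) : Prop :=
  forall p q, p \in S -> q \in S -> p.1 != q.1 -> p.2 != q.2 ->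
    exists r, [/\ r \in S, r != p, r != q & in_box p q r].

Definition semi_perm (X : seq point) : Prop :=
  forall p q, p \in X -> q \in X -> p.2 = q.2 -> p = q.

Definition has_sol (X : seq point) (n : nat) : Prop :=
  exists Y : seq point, [/\ uniq Y, size Y = n & satisfied (X ++ Y)].

Definition has_solb (X : seq point) (n : nat) : bool :=
  if excluded_middle_informative (has_sol X n) then true else false.

Lemma has_solbP X n : reflect (has_sol X n) (has_solb X n).
Proof.
by rewrite /has_solb; case: excluded_middle_informative => h; constructor.
Qed.

(* The grid of active columns x active rows always works. *)
Lemma has_sol_ex X : exists n, has_solb X n.
Proof.
pose G := undup [seq (x, y) | x <- [seq p.1 | p <- X], y <- [seq p.2 | p <- X]].
exists (size G); apply/has_solbP; exists G; split => //; first exact: undup_uniq.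
have hx : forall p, p \in X ++ G -> p.1 \in [seq p.1 | p <- X].
  move=> p; rewrite mem_cat => /orP [pX|]; first by apply/mapP; exists p.
  rewrite mem_undup => /allpairsP [[x y] [hx _ ->]] //.
have hy : forall p, p \in X ++ G -> p.2 \in [seq p.2 | p <- X].
  move=> p; rewrite mem_cat => /orP [pX|]; first by apply/mapP; exists p.
  rewrite mem_undup => /allpairsP [[x y] [_ hy ->]] //.
move=> p q pS qS nx ny; exists (p.1, q.2); split.
- rewrite mem_cat mem_undup; apply/orP; right; apply/allpairsP.
  by exists (p.1, q.2); split; [exact: hx pS | exact: hy qS | by []].
- by apply/eqP => /(congr1 snd) /= /eqP; rewrite eq_sym (negbTE ny).
- by apply/eqP => /(congr1 fst) /= /eqP; rewrite (negbTE nx).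
- by rewrite /in_box /= ge_min le_max ge_min le_max !lexx ?orbT ?orTb.
Qed.

Definition opt (X : seq point) : nat := ex_minn (has_sol_ex X).

(* A vertical line with x-coordinate k + 1/2 is represented by the integer k.
   A closed vertical strip (within the bounding box B) is represented by the
   pair (a, b) of the smallest and largest integer x-coordinates it contains. *)

Definition minx (X : seq point) : int :=
  \big[Num.min/(head (0, 0) X).1]_(p <- X) p.1.
Definition maxx (X : seq point) : int :=
  \big[Num.max/(head (0, 0) X).1]_(p <- X) p.1.

Definition in_strip (s : int * int) (x : int) : bool := (s.1 <= x <= s.2).

Definition ncols (X : seq point) (s : int * int) : nat :=
  size (undup [seq p.1 | p <- X & in_strip s p.1]).

Inductive ptree := Leaf | Node of int & ptree & ptree.

Fixpoint valid_tree (X : seq point) (t : ptree) (a b : int) : bool :=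
  match t with
  | Leaf => ncols X (a, b) == 1%N
  | Node k l r => [&& a <= k, k < b, valid_tree X l a k & valid_tree X r (k + 1) b]
  end.

Definition is_ptree (X : seq point) (t : ptree) : bool :=
  valid_tree X t (minx X) (maxx X).

(* Vertices of t, as (address, strip) pairs; the address is the sequence of
   left (false) / right (true) choices from the root. *)
Fixpoint nodes (t : ptree) (a b : int) : seq (seq bool * (int * int)) :=
  match t with
  | Leaf => [:: ([::], (a, b))]
  | Node k l r => ([::], (a, b)) ::
      [seq (false :: v.1, v.2) | v <- nodes l a k] ++
      [seq (true :: v.1, v.2) | v <- nodes r (k + 1) b]
  end.

Fixpoint leaves (t : ptree) : seq (seq bool) :=
  match t with
  | Leaf => [:: [::]]
  | Node _ l r => [seq false :: v | v <- leaves l] ++ [seq true :: v | v <- leaves r]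
  end.

(* U is a set of vertices of T such that every root-to-leaf path of T
   contains exactly one vertex of U (the vertices on the path to leaf w are
   exactly those whose address is a prefix of w). *)
Definition cut (X : seq point) (t : ptree) (U : seq (seq bool * (int * int))) : Prop :=
  [/\ uniq U, {subset U <= nodes t (minx X) (maxx X)} &
      forall w, w \in leaves t -> count (fun u => prefix u.1 w) U = 1%N].

Definition strip_inst (X : seq point) (s : int * int) : seq point :=
  [seq p <- X | in_strip s p.1].

Definition leftcol (X : seq point) (s : int * int) : int :=
  \big[Num.min/s.2]_(p <- X | in_strip s p.1) p.1.

Definition compress_x (X : seq point) (U : seq (seq bool * (int * int))) (x : int) : int :=
  match [seq u <- U | in_strip u.2 x] with
  | u :: _ => leftcol X u.2
  | [::] => x
  end.

Definition compressed (X : seq point) (U : seq (seq bool * (int * int))) : seq point :=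
  [seq (compress_x X U p.1, p.2) | p <- X].

(* Main.v *)
Require Import Defs.
From mathcomp Require Import all_boot all_order all_algebra.
From mathcomp Require Import zify.
Set Implicit Arguments. Unset Strict Implicit. Unset Printing Implicit Defensive.
Import Order.TTheory GRing.Theory Num.Theory.
Local Open Scope ring_scope.

Lemma pairE (p : point) : (p.1, p.2) = p. Proof. by case: p. Qed.

Lemma in_boxE (p q r : point) : in_box p q r =
  [&& Num.min p.1 q.1 <= r.1, r.1 <= Num.max p.1 q.1,
      Num.min p.2 q.2 <= r.2 & r.2 <= Num.max p.2 q.2].
Proof. by rewrite /in_box -!andbA. Qed.

Lemma sat_get (Z : seq point) : satisfied Z -> forall p q : point, p \in Z -> q \in Z ->
  p.1 != q.1 -> p.2 != q.2 ->
  exists r : point, [/\ r \in Z, r != p, r != q & in_box p q r].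
Proof. move=> h p q pZ qZ n1 n2; have [r [? ? ? ?]] := h p q pZ qZ n1 n2. by exists r. Qed.

Lemma sat_eq_mem (S S' : seq point) : S =i S' -> satisfied S -> satisfied S'.
Proof.
move=> e h p q; rewrite -!e => pS qS n1 n2.
have [r [rS rp rq rb]] := h p q pS qS n1 n2.
by exists r; split => //; rewrite -e.
Qed.

Lemma sat_strip (Z : seq point) s : satisfied Z -> satisfied (strip_inst Z s).
Proof.
move=> h p q; rewrite !mem_filter /in_strip => /andP [hp pZ] /andP [hq qZ] n1 n2.
have [r [rS rp rq]] := h p q pZ qZ n1 n2.
rewrite in_boxE => /and4P [h1 h2 h3 h4].
exists r; split => //; last by rewrite in_boxE h1 h2 h3 h4.
rewrite mem_filter rS andbT /in_strip; lia.
Qed.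

Lemma mono_box (x1 x2 y f1 f2 fy : int) : Num.min x1 x2 <= y -> y <= Num.max x1 x2 ->
  (x1 <= y -> f1 <= fy) -> (x2 <= y -> f2 <= fy) -> (y <= x1 -> fy <= f1) -> (y <= x2 -> fy <= f2) ->
  Num.min f1 f2 <= fy /\ fy <= Num.max f1 f2.
Proof.
move=> h1 h2 m1 m2 m3 m4.
case: (lerP x1 x2) => h.
  have := m1 ltac:(lia); have := m4 ltac:(lia); lia.
have := m2 ltac:(lia); have := m3 ltac:(lia); lia.
Qed.

Lemma sat_map (F : point -> point) (Z : seq point) :
  satisfied Z ->
  (forall z1 z2 : point, z1 \in Z -> z2 \in Z -> z1.1 <= z2.1 -> (F z1).1 <= (F z2).1) ->
  (forall z1 z2 : point, z1 \in Z -> z2 \in Z -> z1.2 <= z2.2 -> (F z1).2 <= (F z2).2) ->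
  satisfied (map F Z).
Proof.
move=> hs m1 m2 p' q' /mapP [a0 a0Z ea0] /mapP [b0 b0Z eb0] n1 n2.
suff claim : forall n (a b : point), a \in Z -> b \in Z -> F a = p' -> F b = q' ->
  (`|a.1 - b.1| + `|a.2 - b.2| <= n)%N ->
  exists r, [/\ r \in map F Z, r != p', r != q' & in_box p' q' r].
  exact: (claim _ a0 b0 a0Z b0Z (esym ea0) (esym eb0) (leqnn _)).
move=> {a0 b0 a0Z b0Z ea0 eb0} n.
elim: n => [|n IH] a b aZ bZ ea eb hn; rewrite -ea -eb in n1 n2.
  have e1 : a.1 = b.1 by lia.
  have : (F a).1 = (F b).1.
    by apply/eqP; rewrite eq_le !m1 // e1 lexx.
  by move/eqP; rewrite (negbTE n1).
have na1 : a.1 != b.1.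
  apply: contra n1 => /eqP e1; rewrite eq_le !m1 // e1 lexx //.
have na2 : a.2 != b.2.
  apply: contra n2 => /eqP e1; rewrite eq_le !m2 // e1 lexx //.
have [r [rZ ra rb]] := sat_get hs aZ bZ na1 na2.
rewrite in_boxE => /and4P [h1 h2 h3 h4].
have fbox : in_box (F a) (F b) (F r).
  rewrite in_boxE; apply/and4P.
  have [k1 k2] := mono_box h1 h2 (m1 a r aZ rZ) (m1 b r bZ rZ) (m1 r a rZ aZ) (m1 r b rZ bZ).
  have [k3 k4] := mono_box h3 h4 (m2 a r aZ rZ) (m2 b r bZ rZ) (m2 r a rZ aZ) (m2 r b rZ bZ).
  by split.
have [era|nra] := eqVneq (F r) (F a).
  apply: (IH r b rZ bZ) => //; first by rewrite era.
  move: ra hn h1 h2 h3 h4; clear; case: r => r1 r2; case: a => a1 a2; case: b => b1 b2 /=.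
  rewrite xpair_eqE negb_and; lia.
have [erb|nrb] := eqVneq (F r) (F b).
  apply: (IH a r aZ rZ) => //; first by rewrite erb.
  move: rb hn h1 h2 h3 h4; clear; case: r => r1 r2; case: a => a1 a2; case: b => b1 b2 /=.
  rewrite xpair_eqE negb_and; lia.
exists (F r); rewrite -ea -eb; split => //; exact: map_f.
Qed.

Lemma opt_spec (X : seq point) :
  exists Y : seq point, [/\ uniq Y, size Y = opt X & satisfied (X ++ Y)].
Proof. by rewrite /opt; case: ex_minnP => m /has_solbP [Y [u s h]] _; exists Y. Qed.

Lemma opt_le (W Y : seq point) : uniq Y -> satisfied (W ++ Y) -> (opt W <= size Y)%N.
Proof.
move=> u h; rewrite /opt; case: ex_minnP => m _; apply.
by apply/has_solbP; exists Y.
Qed.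

Lemma opt_sub (W Z : seq point) : satisfied Z -> {subset W <= Z} ->
  (opt W <= size (undup [seq z <- Z | z \notin W]))%N.
Proof.
move=> h sub; apply: opt_le; first exact: undup_uniq.
apply: sat_eq_mem h => z; rewrite mem_cat mem_undup mem_filter.
case: (boolP (z \in W)) => [/sub -> //|_] //=.
Qed.

Lemma opt_nil : opt [::] = 0%N.
Proof.
apply/eqP; rewrite -leqn0; by apply: (@opt_le [::] [::]).

Qed.

Definition btw (a r y : int) := (a < y < r) || (r < y < a).

Lemma shared_col (Z : seq point) (a r : int) : satisfied Z -> a != r ->
  (forall t : point, t \in Z -> ~~ btw a r t.2) ->
  forall n (z u : point), (`|z.1 - u.1| <= n)%N -> z \in Z -> u \in Z -> z.2 = r -> u.2 = a ->
  exists c, (c, r) \in Z /\ (c, a) \in Z.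
Proof.
move=> hs ar nb n; elim: n => [|n IH] z u hn zZ uZ zr ua.
  exists z.1; rewrite -zr -ua pairE.
  have -> : z.1 = u.1 by lia.
  by rewrite pairE.
have [e|ne] := eqVneq z.1 u.1.
  exists z.1; rewrite -zr -ua pairE e pairE; done.
have ne2 : z.2 != u.2 by rewrite zr ua eq_sym.
have [t [tZ tz tu]] := sat_get hs zZ uZ ne ne2.
rewrite in_boxE => /and4P [h1 h2 h3 h4].
have := nb t tZ; rewrite /btw => nbt.
have [etr|ntr] := eqVneq t.2 r.
  apply: (IH t u) => //.
  move: tz hn h1 h2 etr zr; clear; case: t => t1 t2; case: z => z1 z2 /=.
  rewrite xpair_eqE negb_and; lia.
have eta : t.2 = a by lia.
apply: (IH z t) => //.
move: tu hn h1 h2 eta ua; clear; case: t => t1 t2; case: u => u1 u2 /=.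
rewrite xpair_eqE negb_and; lia.
Qed.

Lemma closest (Z : seq point) (r : int) : forall n (u : point), u \in Z -> u.2 != r ->
  (`|u.2 - r| <= n)%N ->
  exists v : point, [/\ v \in Z, v.2 != r & forall t : point, t \in Z -> ~~ btw v.2 r t.2].
Proof.
elim=> [|n IH] u uZ ur hn; first by lia.
case: (boolP (has (fun t : point => btw u.2 r t.2) Z)) => [/hasP [t tZ bt]|].
  apply: (IH t) => //; move: bt hn; rewrite /btw; lia.
move/hasPn => h; exists u; split => //.
Qed.

Definition rowsOut (Z W : seq point) := undup [seq z.2 | z <- Z & z.2 \notin map snd W].
Definition nonW (Z W : seq point) := undup [seq z <- Z | z \notin W].

Lemma key_lemma n : forall Z W : seq point, (size (rowsOut Z W) <= n)%N ->
  satisfied Z -> W != [::] -> {subset W <= Z} ->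
  (opt W + size (rowsOut Z W) <= size (nonW Z W))%N.
Proof.
elim: n => [|n IH] Z W hsz hs hW sub.
  by move: hsz; rewrite leqn0 => /eqP ->; rewrite addn0; apply: opt_sub.
case E : (rowsOut Z W) => [|r rs].
  by rewrite addn0; apply: opt_sub.
have rin : r \in rowsOut Z W by rewrite E mem_head.
move: (rin); rewrite mem_undup => /mapP [z0]; rewrite mem_filter => /andP [rW z0Z] er.
rewrite -er in rW.
case: W hW sub rW E hsz rin => [//|w0 W'] _ sub rW E hsz rin.
set W := w0 :: W' in sub rW *.
have w0Z : w0 \in Z by apply: sub; rewrite mem_head.
have w0r : w0.2 != r.
  by apply: contraNneq rW => <-; apply: map_f; rewrite mem_head.
have [v [vZ vr nb]] := closest w0Z w0r (leqnn _).
set a := v.2 in vr nb.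
have [c [crZ caZ]] := shared_col hs vr nb (leqnn _) z0Z vZ (esym er) erefl.
pose h (z : point) : point := if z.2 == r then (z.1, a) else z.
have hW : forall w, w \in W -> h w = w.
  move=> w wW; rewrite /h ifN //; apply: contraNneq rW => <-; exact: map_f.
have sat' : satisfied (map h Z).
  apply: (@sat_map h Z hs).
  - by move=> z1 z2 _ _; rewrite /h; case: ifP; case: ifP.
  - move=> z1 z2 z1Z z2Z; have := nb z1 z1Z; have := nb z2 z2Z.
    rewrite /h /btw; case: ifP => /eqP e1; case: ifP => /eqP e2 /=; lia.
have sub' : {subset W <= map h Z}.
  by move=> w wW; rewrite -(hW w wW); apply: map_f; apply: sub.
have rows' : (size (rowsOut (map h Z) W) <= (size (rowsOut Z W)).-1)%N.
  rewrite -(size_rem rin).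
  apply: uniq_leq_size; first exact: undup_uniq.
  move=> y; rewrite mem_undup => /mapP [z']; rewrite mem_filter => /andP [yW /mapP [z zZ ez']] ey; subst y z'.
  rewrite mem_rem_uniq ?undup_uniq // inE.
  move: yW; rewrite /h; case: ifP => [/eqP zr|/negbT zr] /= yW.
    rewrite vr /= mem_undup; apply/mapP; exists v => //; by rewrite mem_filter yW vZ.
  rewrite zr /= mem_undup; apply/mapP; exists z => //; by rewrite mem_filter yW zZ.
have crW : (c, r) \notin W.
  by apply: contra rW => crW; apply/mapP; exists (c, r).
have cr_in : (c, r) \in nonW Z W by rewrite mem_undup mem_filter crW crZ.
have nonW' : (size (nonW (map h Z) W) <= (size (nonW Z W)).-1)%N.
  rewrite -(size_rem cr_in) -(size_map h (rem (c, r) (nonW Z W))).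
  apply: uniq_leq_size; first exact: undup_uniq.
  move=> z'; rewrite mem_undup mem_filter => /andP [z'W /mapP [z zZ ez']].
  have zW : z \notin W by apply: contra z'W => zW; rewrite ez' hW.
  case: (eqVneq z (c, r)) => [ez|nz].
    apply/mapP; exists (c, a).
      rewrite mem_rem_uniq ?undup_uniq // inE xpair_eqE eqxx vr /=.
      rewrite mem_undup mem_filter caZ andbT.
      by move: z'W; rewrite ez' ez /h /= eqxx.
    by rewrite ez' ez /h /= eqxx (negbTE vr).
  apply/mapP; exists z => //.
  by rewrite mem_rem_uniq ?undup_uniq // inE nz /= mem_undup mem_filter zW zZ.
have hsz' : (size (rowsOut (map h Z) W) <= n)%N.
  by move: rows' hsz; rewrite E /=; lia.
have := IH (map h Z) W hsz' sat' erefl sub'.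
have rows2 : ((size (rowsOut Z W)).-1 <= size (rowsOut (map h Z) W))%N.
  rewrite -(size_rem rin).
  apply: uniq_leq_size; first by apply: rem_uniq; exact: undup_uniq.
  move=> y; rewrite mem_rem_uniq ?undup_uniq // inE => /andP [yr].
  rewrite !mem_undup => /mapP [z]; rewrite mem_filter => /andP [yW zZ] ey; subst y.
  apply/mapP; exists z => //; rewrite mem_filter yW /=.
  have -> : z = h z by rewrite /h ifN.
  exact: map_f.
have pos : (0 < size (nonW Z W))%N by move: cr_in; case: (nonW Z W).
move: rows' rows2 nonW' pos; rewrite E /=; lia.
Qed.

Definition collapse (X : seq point) (s : int * int) : seq point :=
  [seq (if in_strip s p.1 then leftcol X s else p.1, p.2) | p <- X].

Lemma leftcol_cons (q : point) X s : leftcol (q :: X) s =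
  if in_strip s q.1 then Num.min q.1 (leftcol X s) else leftcol X s.
Proof. by rewrite /leftcol big_cons. Qed.

Lemma leftcol_ub X s : leftcol X s <= s.2.
Proof.
elim: X => [|q X IH]; first by rewrite /leftcol big_nil.
by rewrite leftcol_cons; case: ifP => // _; rewrite ge_min IH orbT.
Qed.

Lemma leftcol_lb X s : s.1 <= s.2 -> s.1 <= leftcol X s.
Proof.
move=> h; elim: X => [|q X IH]; first by rewrite /leftcol big_nil.
rewrite leftcol_cons; case: ifP => // hq; rewrite le_min IH andbT.
by move: hq; rewrite /in_strip => /andP [].
Qed.

Lemma leftcol_le X s (p : point) : p \in X -> in_strip s p.1 -> leftcol X s <= p.1.
Proof.
elim: X => [//|q X IH]; rewrite inE leftcol_cons => /orP [/eqP ->|pX] hp.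
  by rewrite hp ge_min lexx.
by case: ifP => _; rewrite ?ge_min IH ?orbT.
Qed.

Lemma leftcol_in X s (p : point) : p \in X -> in_strip s p.1 -> in_strip s (leftcol X s).
Proof.
move=> pX hp; rewrite /in_strip leftcol_ub andbT.
by apply: leftcol_lb; move: hp; rewrite /in_strip => /andP [h1 h2]; exact: le_trans h1 h2.
Qed.

Lemma one_strip (X : seq point) s :
  (opt (strip_inst X s) + opt (collapse X s) <= opt X)%N.
Proof.
case E: (strip_inst X s) => [|x0 xs].
  rewrite opt_nil add0n /collapse map_id_in //.
  move=> p pX /=; case: ifP => hp; last by rewrite pairE.
  have : p \in strip_inst X s by rewrite mem_filter hp pX.
  by rewrite E.
rewrite -E.
have : x0 \in strip_inst X s by rewrite E mem_head.
rewrite mem_filter => /andP [x0s x0X].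
set l := leftcol X s.
have ls : in_strip s l := leftcol_in x0X x0s.
have [Y [uY sY hY]] := opt_spec X.
set Z := X ++ Y.
pose G (p : point) : point := (if in_strip s p.1 then l else p.1, p.2).
have sat1 : satisfied (map G Z).
  apply: (@sat_map G Z hY); last by [].
  move=> z1 z2 _ _; move: ls; rewrite /G /in_strip /=.
  case: ifP => h1; case: ifP => h2 /=; lia.
have sub1 : {subset collapse X s <= map G Z}.
  by move=> z /mapP [x xX ->]; apply: map_f; rewrite mem_cat xX.
have h1 := opt_sub sat1 sub1.
set Xs := strip_inst X s.
set Zs := strip_inst Z s.
have XsZs : {subset Xs <= Zs}.
  by move=> x; rewrite !mem_filter mem_cat => /andP [-> ->].
have hne : Xs != [::] by rewrite /Xs E.
have hk := @key_lemma _ Zs Xs (leqnn _) (@sat_strip Z s hY) hne XsZs.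
have c1 : (size (nonW Zs Xs) <= size (strip_inst Y s))%N.
  apply: uniq_leq_size; first exact: undup_uniq.
  move=> z; rewrite mem_undup !mem_filter mem_cat => /andP [zXs /andP [zs /orP [zX|zY]]].
    by move: zXs; rewrite zs zX.
  by rewrite zs zY.
have c2 : (size (nonW (map G Z) (collapse X s)) <=
   size ([seq p <- Y | ~~ in_strip s p.1] ++ map (fun y => (l, y)) (rowsOut Zs Xs)))%N.
  apply: uniq_leq_size; first exact: undup_uniq.
  move=> z; rewrite mem_undup mem_filter => /andP [zc /mapP [w wZ ez]].
  have wY : w \in Y.
    move: wZ; rewrite mem_cat => /orP [wX|//].
    by move: zc; rewrite ez (map_f G wX).
  rewrite mem_cat; apply/orP.
  case: (boolP (in_strip s w.1)) => ws.
    right; rewrite ez /G ws; apply: map_f.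
    rewrite mem_undup; apply/mapP; exists w => //.
    rewrite mem_filter mem_filter ws mem_cat wY orbT andbT.
    rewrite andbT; apply: contra zc => /mapP [x]; rewrite mem_filter => /andP [xS xX] ex.
    rewrite ez; apply/mapP; exists x => //.
    by rewrite /G ws xS ex.
  by left; rewrite ez mem_filter /G (negbTE ws) /= pairE ws wY.

have c3 : (size (strip_inst Y s) + size [seq p <- Y | ~~ in_strip s p.1])%N = size Y.
  by rewrite !size_filter count_predC.
move: c2; rewrite size_cat size_map => c2.
move: h1 hk c1 c2 c3; rewrite sY /nonW; lia.
Qed.

Definition sdisj (s t : int * int) : Prop := forall x, in_strip s x -> ~~ in_strip t x.

Fixpoint pdisj (U : seq (seq bool * (int * int))) : Prop :=
  match U with
  | [::] => True
  | u :: U' => (forall v, v \in U' -> sdisj u.2 v.2) /\ pdisj U'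
  end.

Lemma filter_nil (T : eqType) (a : pred T) (s : seq T) : {in s, forall x, ~~ a x} -> filter a s = [::].
Proof.
elim: s => [//|x s IH] h /=; rewrite (negbTE (h x (mem_head _ _))) IH //.
by move=> y ys; apply: h; rewrite inE ys orbT.
Qed.

Lemma leftcol_collapse (X : seq point) s t l :
  (forall p : point, p \in X -> in_strip s p.1 -> in_strip s l) -> sdisj s t ->
  leftcol [seq (if in_strip s p.1 then l else p.1, p.2) | p <- X] t = leftcol X t.
Proof.
move=> ls d; elim: X ls => [//|q X IH] ls /=; rewrite !leftcol_cons IH /=; last first.
  by move=> p pX; apply: ls; rewrite inE pX orbT.
case: (boolP (in_strip s q.1)) => qs /=; last by [].
have lsl := ls q (mem_head _ _) qs.
by rewrite (negbTE (d _ lsl)) (negbTE (d _ qs)).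
Qed.

Lemma strip_collapse (X : seq point) s t : sdisj s t ->
  strip_inst (collapse X s) t = strip_inst X t.
Proof.
move=> d; rewrite /strip_inst /collapse filter_map.
rewrite (@eq_in_filter _ _ (fun p : point => in_strip t p.1)); last first.
  move=> p pX /=; case: ifP => ps //.
  by rewrite (negbTE (d _ ps)) (negbTE (d _ (leftcol_in pX ps))).
apply: map_id_in => p; rewrite mem_filter => /andP [pt _].
case: ifP => ps; last by rewrite pairE.
by move: (d _ ps); rewrite pt.
Qed.

Lemma compressed_collapse (X : seq point) u U' : (forall v, v \in U' -> sdisj u.2 v.2) ->
  compressed (collapse X u.2) U' = compressed X (u :: U').
Proof.
move=> d; rewrite /compressed /collapse -map_comp; apply/eq_in_map => p pX /=.
congr (_, _); rewrite {2}/compress_x /=.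
case: ifP => ps.
  rewrite /compress_x filter_nil //.
  by move=> v vU; apply: d => //; exact: leftcol_in pX ps.
rewrite /compress_x; case E : [seq v <- U' | in_strip v.2 p.1] => [//|v vs].
have : v \in [seq v <- U' | in_strip v.2 p.1] by rewrite E mem_head.
rewrite mem_filter => /andP [_ vU].
apply: leftcol_collapse; last exact: d.
by move=> q qX qs; exact: leftcol_in qX qs.
Qed.

Lemma main_gen (U : seq (seq bool * (int * int))) : forall X : seq point, pdisj U ->
  (\sum_(u <- U) opt (strip_inst X u.2) + opt (compressed X U) <= opt X)%N.
Proof.
elim: U => [|u U' IH] X /=.
  move=> _; rewrite big_nil add0n /compressed /compress_x /=.
  by rewrite map_id_in // => p _; rewrite pairE.
move=> [d pd]; rewrite big_cons.
have e1 : (\sum_(v <- U') opt (strip_inst X v.2) =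
          \sum_(v <- U') opt (strip_inst (collapse X u.2) v.2))%N.
  by apply: eq_big_seq => v vU; rewrite strip_collapse //; apply: d.
rewrite e1 -compressed_collapse //.
have h1 := IH (collapse X u.2) pd.
have h2 := one_strip X u.2.
rewrite -addnA; apply: leq_trans h2; rewrite leq_add2l; exact: h1.
Qed.

Lemma node_strip (X : seq point) t : forall a b, valid_tree X t a b ->
  forall u, u \in nodes t a b -> forall x, in_strip u.2 x -> in_strip (a, b) x.
Proof.
elim: t => [|k l IHl r IHr] a b /=.
  by move=> _ u; rewrite inE => /eqP ->.
move=> /and4P [ak kb vl vr] u; rewrite inE mem_cat => /or3P [/eqP ->//| |].
  move=> /mapP [u' u'l ->] x /= hx.
  have := IHl _ _ vl u' u'l x hx; rewrite /in_strip /=; lia.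
move=> /mapP [u' u'r ->] x /= hx.
have := IHr _ _ vr u' u'r x hx; rewrite /in_strip /=; lia.
Qed.

Lemma node_rel (X : seq point) t : forall a b, valid_tree X t a b ->
  forall u v, u \in nodes t a b -> v \in nodes t a b ->
  [\/ prefix u.1 v.1, prefix v.1 u.1 | sdisj u.2 v.2].
Proof.
elim: t => [|k l IHl r IHr] a b /=.
  by move=> _ u v; rewrite !inE => /eqP -> /eqP ->; apply: Or31.
move=> /and4P [ak kb vl vr] u v; rewrite !inE !mem_cat.
move=> /or3P [/eqP ->|/mapP [u' u'l ->]|/mapP [u' u'r ->]]; first by move=> _; apply: Or31; case: v.1.
- move=> /or3P [/eqP ->|/mapP [v' v'l ->]|/mapP [v' v'r ->]]; first by apply: Or32; case: u'.1.
  + have [h|h|h] := IHl _ _ vl _ _ u'l v'l; [apply: Or31|apply: Or32|apply: Or33]; rewrite /= ?eqxx //=. 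
  + constructor 3 => x hx /=; apply/negP => hx'.
    have := node_strip vl u'l hx; have := node_strip vr v'r hx'; rewrite /in_strip /=; lia.
- move=> /or3P [/eqP ->|/mapP [v' v'l ->]|/mapP [v' v'r ->]]; first by apply: Or32; case: u'.1.
  + constructor 3 => x hx /=; apply/negP => hx'.
    have := node_strip vr u'r hx; have := node_strip vl v'l hx'; rewrite /in_strip /=; lia.
  + have [h|h|h] := IHr _ _ vr _ _ u'r v'r; [apply: Or31|apply: Or32|apply: Or33]; rewrite /= ?eqxx //=. 
Qed.

Lemma root_in t a b : ([::], (a, b)) \in nodes t a b.
Proof. by case: t => [|k l r]; rewrite /= mem_head. Qed.

Lemma node_leaf t : forall a b u, u \in nodes t a b -> exists2 w, w \in leaves t & prefix u.1 w.
Proof.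
elim: t => [|k l IHl r IHr] a b u /=.
  by rewrite inE => /eqP ->; exists [::]; rewrite ?mem_head.
rewrite inE mem_cat => /or3P [/eqP ->| /mapP [u' u'l ->] | /mapP [u' u'r ->]].
- have [w wl _] := IHl a k _ (root_in l a k).
  by exists (false :: w) => //; rewrite mem_cat map_f.
- have [w wl pw] := IHl a k u' u'l.
  by exists (false :: w); rewrite ?mem_cat ?map_f //= eqxx.
- have [w wl pw] := IHr (k + 1) b u' u'r.
  by exists (true :: w); rewrite ?mem_cat ?map_f ?orbT //= eqxx.
Qed.

Lemma count2 (T : eqType) (p : pred T) (s : seq T) x y :
  x \in s -> y \in s -> x != y -> p x -> p y -> (2 <= count p s)%N.
Proof.
move=> xs ys xy px py; rewrite -size_filter.
apply: leq_trans (size_undup _).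
have -> : 2%N = size [:: x; y] by [].
apply: uniq_leq_size; first by rewrite /= inE xy.
by move=> z; rewrite !inE mem_undup mem_filter => /orP [/eqP ->|/eqP ->]; rewrite ?px ?py.
Qed.

Lemma cut_pdisj X T U : is_ptree X T -> cut X T U -> pdisj U.
Proof.
move=> vt [uU sub cnt].
have H : forall u v, u \in U -> v \in U -> u != v -> sdisj u.2 v.2.
  move=> u v uU' vU' ne.
  have [p|p|d] := node_rel vt (sub u uU') (sub v vU'); last exact: d.
  - have [w wl pw] := node_leaf (sub v vU').
    have := cnt w wl.
    have := count2 (p := fun u0 : seq bool * (int * int) => prefix u0.1 w) uU' vU' ne (prefix_trans p pw) pw.
    by move=> h2 h1; move: (leq_trans h2 (eq_leq h1)).
  - have [w wl pw] := node_leaf (sub u uU').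
    have := cnt w wl.
    have := count2 (p := fun u0 : seq bool * (int * int) => prefix u0.1 w) uU' vU' ne pw (prefix_trans p pw).
    by move=> h2 h1; move: (leq_trans h2 (eq_leq h1)).
elim: U uU {sub cnt} H => [//|u U' IH] /= /andP [uU' uniqU'] H; split.
  move=> v vU'; apply: H; rewrite ?mem_head ?inE ?vU' ?orbT //.
  by apply: contraNneq uU' => ->.
apply: IH => // u0 v0 u0U v0U; apply: H; rewrite inE ?u0U ?v0U orbT //.
Qed.

Theorem theorem3p3 (X : seq point) (T : ptree) (U : seq (seq bool * (int * int))) :
  uniq X -> semi_perm X -> is_ptree X T -> cut X T U ->
  (\sum_(u <- U) opt (strip_inst X u.2) + opt (compressed X U) <= opt X)%N.
Proof.
move=> _ _ vt hc; apply: main_gen; exact: cut_pdisj vt hc.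
Qed.
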